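(* Let $K$ be a finite ordered simplicial complex in $\mathbb{R}^N$ and let $\{U_i\}$ be a locally finite cover of $\mathbb{R}^N$ by convex open sets. Then for all sufficiently large $\ell$, the subcomplexes $K_\ell\cap U_i$ are nice and cover $K_\ell$ (every simplex of $K_\ell$ lies in some $K_\ell\cap U_i$).
   Context: A simplicial complex is a locally finite set of linear simplices in $\mathbb{R}^N$ closed under faces with pairwise intersections common faces; ordered means vertices totally ordered. $K_\ell$ is the $\ell$th crystalline subdivision: for an ordered $m$-simplex $\langle v_0,\dots,v_m\rangle$, $m>0$, let $\iota$ be affine into $[0,1]^m$ with $\iota(v_j)=(0,\dots,0,1,\dots,1)$ ($j$ zeros), subdivide $[0,1]^m$ into $2^{\ell m}$ cubes of side $2^{-\ell}$, each into the $m!$ rescaled translates of $\{0\le x_{\pi(1)}\le\dots\le x_{\pi(m)}\le1\}$, and pull back via $\iota$. $K\cap U$ is the maximal subcomplex of $K$ contained in $U$. For a subcomplex $K'$ and $\Delta\in K$, $\Delta\cap K'$ denotes the simplices of $K'$ that are faces of $\Delta$; $\operatorname{star}(K')$ is the set of simplices sharing a face with some simplex of $K'$, with their faces; $K'$ is nice if for every $\Delta\in\operatorname{star}(K')$, $\Delta\cap K'$ is a single face of $\Delta$ (with its faces). *)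

(* Defs.v *)
From HB Require Import structures.
From mathcomp Require Import all_boot all_order all_algebra.
From mathcomp Require Import all_classical all_reals all_analysis.

Set Implicit Arguments.
Unset Strict Implicit.
Unset Printing Implicit Defensive.

Import Order.TTheory GRing.Theory Num.Theory.
Import numFieldNormedType.Exports.
Local Open Scope classical_set_scope.
Local Open Scope ring_scope.

Section Defs.
Variables (R : realType) (N : nat).
Local Notation pt := 'rV[R]_N.

(** A (linear) simplex is given by its list of vertices (ordered simplex:
    the list order is the vertex order). *)

Definition chull (D : seq pt) : set pt :=
  [set x | exists lam : nat -> R,
      (forall j, 0 <= lam j) /\ \sum_(j < size D) lam j = 1 /\
      x = \sum_(j < size D) lam j *: nth 0 D j].

Definition aff_indep (D : seq pt) : Prop :=
  forall lam : nat -> R,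
    \sum_(j < size D) lam j = 0 ->
    \sum_(j < size D) lam j *: nth 0 D j = 0 ->
    forall j, (j < size D)%N -> lam j = 0.

Definition is_face (F D : seq pt) : Prop := F != [::] /\ {subset F <= D}.

Definition ordered_complex (lt : rel pt) (K : seq (seq pt)) : Prop :=
  (forall x, ~~ lt x x) /\
  (forall x y z, lt x y -> lt y z -> lt x z) /\
  (forall D D' x y, D \in K -> D' \in K -> x \in D -> y \in D' ->
      x != y -> lt x y || lt y x) /\
  (forall D, D \in K -> [/\ D != [::], aff_indep D & sorted lt D]) /\
  (forall D F, D \in K -> subseq F D -> F != [::] -> F \in K) /\
  (forall D D', D \in K -> D' \in K ->
      exists F, (F == [::] \/ F \in K) /\ {subset F <= D} /\ {subset F <= D'} /\
        chull D `&` chull D' = chull F).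

(** For an ordered m-simplex D = <v_0,...,v_m>,
    iota maps v_j to (0,..,0,1,..,1) (j zeros) in [0,1]^m; its inverse is
    the affine map [cpullback D] below: y |-> sum_j cbary m y j *: v_j, where
    (with 0-based coordinates y_0..y_(m-1), y_(-1) := 0, y_m := 1)
    cbary m y j = y_j - y_(j-1). *)
Definition Yext (m : nat) (y : nat -> R) (j : nat) : R :=
  if (j < m)%N then y j else 1.

Definition cbary (m : nat) (y : nat -> R) (j : nat) : R :=
  Yext m y j - (if j is j'.+1 then Yext m y j' else 0).

Definition cpullback (D : seq pt) (y : nat -> R) : pt :=
  \sum_(j < size D) cbary (size D).-1 y j *: nth 0 D j.

(** y lies in iota(D) = {0 <= y_0 <= ... <= y_(m-1) <= 1} *)
Definition in_std (m : nat) (y : nat -> R) : Prop :=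
  forall j, (j <= m)%N -> 0 <= cbary m y j.

(** k-th vertex (k = 0..m) of the simplex
    c 2^-l + 2^-l {0 <= x_(p_0) <= ... <= x_(p_(m-1)) <= 1}
    of the cube with corner c 2^-l, where p is a permutation of 0..m-1:
    the coordinates x_(p_i), i >= k, equal 1, the others 0. *)
Definition fvert (l : nat) (c : nat -> nat) (p : seq nat) (k : nat) : nat -> R :=
  fun i => (c i + (i \in drop k p))%:R / (2 ^ l)%:R.

(** [S] is a simplex of the l-th crystalline subdivision K_l of [K]:
    the pull-back by iota_D, for some D in K, of a face of one of the
    2^(l m) m! small simplices of [0,1]^m that is contained in iota(D);
    a simplex is identified with its vertex set, so any listing of the
    vertices is accepted. *)
Definition crystalline (K : seq (seq pt)) (l : nat) (S : seq pt) : Prop :=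
  exists D, D \in K /\
    exists (c : nat -> nat) (p : seq nat) (ks : seq nat),
      let m := (size D).-1 in
      [/\ (forall i, (i < m)%N -> (c i < 2 ^ l)%N),
          perm_eq p (iota 0 m),
          subseq ks (iota 0 m.+1) /\ ks != [::],
          (forall k, k \in ks -> in_std m (fvert l c p k)) &
          perm_eq S [seq cpullback D (fvert l c p k) | k <- ks]].

(** A complex is represented by the predicate of its simplices. *)

Definition cx_restrict (L : seq pt -> Prop) (U : set pt) : seq pt -> Prop :=
  fun S => L S /\ chull S `<=` U.

Definition cx_star (L L' : seq pt -> Prop) : seq pt -> Prop :=
  fun D => L D /\ exists D1, L D1 /\ is_face D D1 /\
    exists D2, L' D2 /\ exists F, is_face F D1 /\ is_face F D2.

(** K' is cx_nice in L: for every D in cx_star(K'), the simplices of K' that are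
    faces of D are exactly the faces of a single is_face F of D (F = [::]
    standing for the empty is_face, i.e. no such simplex). *)
Definition cx_nice (L L' : seq pt -> Prop) : Prop :=
  forall D, cx_star L L' D ->
    exists F : seq pt, {subset F <= D} /\
      forall S, uniq S -> ((L' S /\ is_face S D) <-> is_face S F).

Definition is_convex (U : set pt) : Prop :=
  forall x y (t : R), U x -> U y -> 0 <= t <= 1 -> U (t *: x + (1 - t) *: y).

Definition locally_finite_cover (I : Type) (U : I -> set pt) : Prop :=
  (forall x : pt, exists i, U i x) /\
  (forall x : pt, exists V : set pt, nbhs x V /\
      finite_set [set i | U i `&` V !=set0]).

End Defs.

(* Main.v *)
Require Import Defs.
From HB Require Import structures.
From mathcomp Require Import all_boot all_order all_algebra.
From mathcomp Require Import all_classical all_reals all_analysis.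
From mathcomp Require Import ring lra.
Import Order.TTheory GRing.Theory Num.Theory.
Import numFieldNormedType.Exports.
Local Open Scope classical_set_scope.
Local Open Scope ring_scope.
Set Implicit Arguments. Unset Strict Implicit.

Section Aux.
Variables (R : realType) (N : nat).
Local Notation pt := 'rV[R]_N.

Lemma chull_vert (S : seq pt) x : x \in S -> chull S x.
Proof.
move=> xS; have hi : (index x S < size S)%N by rewrite index_mem.
exists (fun j => if j == index x S then 1 else 0); split; first by move=> j; case: ifP.
split.
  rewrite (bigD1 (Ordinal hi)) //= eqxx big1 ?addr0 // => j /negbTE.
  by case: ifP => // /eqP ji; rewrite -(inj_eq val_inj) /= ji eqxx.
rewrite (bigD1 (Ordinal hi)) //= eqxx scale1r nth_index // big1 ?addr0 // => j.
case: ifP => [/eqP ji|]; last by rewrite scale0r.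
by rewrite -(inj_eq val_inj) /= ji eqxx.
Qed.

Lemma chull_convex (U : set pt) (S : seq pt) :
  is_convex U -> (forall x, x \in S -> U x) -> chull S `<=` U.
Proof.
move=> cU; elim: S => [|a S IH] HS x [lam [l0 [l1 ->]]].
  by move: l1; rewrite big_ord0 => /eqP; rewrite eq_sym oner_eq0.
move: l1; rewrite /= big_ord_recl /= => l1.
rewrite big_ord_recl /=.
set s := \sum_(i < size S) lam (bump 0 i).
have s0 : 0 <= s by apply: sumr_ge0 => i _; exact: l0.
have es : s = 1 - lam 0%N by rewrite -l1 addrC addKr.
have [sz|sn0] := eqVneq s 0.
  have z : forall i : 'I_(size S), lam (bump 0 i) = 0.
    move=> i; apply: (@psumr_eq0P _ _ xpredT (fun i : 'I_(size S) => lam (bump 0 i))) => // j _.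
  rewrite big1 ?addr0; last by move=> i _; rewrite z scale0r.
  have -> : lam 0%N = 1 by apply/eqP; rewrite eq_sym -subr_eq0 -es sz.
  by rewrite scale1r; apply: HS; rewrite inE eqxx.
have sp : 0 < s by rewrite lt_def sn0.
pose y := \sum_(i < size S) (lam (bump 0 i) / s) *: nth 0 S i.
have Uy : U y.
  apply: IH; first by move=> z zS; apply: HS; rewrite inE zS orbT.
  exists (fun j => lam j.+1 / s); split; first by move=> j; rewrite divr_ge0.
  split; first by rewrite -mulr_suml divff.
  by [].
have -> : \sum_(i < size S) lam (bump 0 i) *: nth 0 S i = (1 - lam 0%N) *: y.
  rewrite -es /y scaler_sumr; apply: eq_bigr => i _.
  by rewrite scalerA mulrC divfK.
apply: cU => //; first by apply: HS; rewrite inE eqxx.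
by rewrite l0 /= -subr_ge0 -es.
Qed.

Lemma cryst_sub (K : seq (seq pt)) l (D S : seq pt) :
  crystalline K l D -> uniq S -> S != [::] -> {subset S <= D} ->
  crystalline K l S.
Proof.
move=> [D0 [D0K [c [p [ks [Hc Hp [Hks ks0] Hstd HD]]]]]] uS S0 SD.
set f := fun k => cpullback D0 (fvert R l c p k) in HD *.
pose g := fun s => nth 0%N ks (index s (map f ks)).
have Smap : forall s, s \in S -> s \in map f ks.
  by move=> s /SD; rewrite (perm_mem HD).
have fg : forall s, s \in S -> f (g s) = s.
  move=> s /Smap sm; rewrite /g -(nth_map 0%N 0) ?nth_index //.
  by rewrite -(size_map f) index_mem.
have gks : forall s, s \in S -> g s \in ks.
  move=> s /Smap sm; rewrite /g mem_nth //.
  by rewrite -(size_map f) index_mem.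
pose ch := map g S.
have uch : uniq ch.
  rewrite map_inj_in_uniq // => a b aS bS gab.
  by rewrite -(fg a aS) -(fg b bS) gab.
have uks : uniq ks by apply: subseq_uniq Hks (iota_uniq _ _).
pose ks' := [seq k <- ks | k \in ch].
have pk : perm_eq ks' ch.
  apply: uniq_perm; first by rewrite filter_uniq.
    by [].
  move=> k; rewrite mem_filter; apply/andP/idP => [[]//|kc]; split => //.
  by move: kc => /mapP [s sS ->]; apply: gks.
exists D0; split => //; exists c, p, ks'; split => //.
- split; first by apply: subseq_trans Hks; apply: filter_subseq.
  apply: contra S0 => /eqP k0; move: (perm_size pk); rewrite k0 size_map.
  by move/esym/eqP; rewrite size_eq0.
- by move=> k; rewrite mem_filter => /andP [_]; apply: Hstd.
- have -> : S = map f ch.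
    by rewrite /ch -map_comp map_id_in // => s sS /=; rewrite fg.
  by rewrite perm_sym; apply: perm_map.
Qed.

End Aux.

Section Aux2.
Variables (R : realType) (N : nat).
Local Notation pt := 'rV[R]_N.

Lemma nice_all (K : seq (seq pt)) l (U : set pt) : is_convex U ->
  cx_nice (crystalline K l) (cx_restrict (crystalline K l) U).
Proof.
move=> cU D [LD _].
exists [seq x <- D | `[< U x >]]; split.
  by move=> x; rewrite mem_filter => /andP [].
move=> S uS; split.
  move=> [[LS HS] [S0 SD]]; split => // x xS.
  rewrite mem_filter SD // andbT; apply/asboolP; apply: HS; exact: chull_vert.
move=> [S0 SF].
have SD : {subset S <= D} by move=> x /SF; rewrite mem_filter => /andP [].
split; last by [].
split; first exact: (cryst_sub LD uS S0 SD).
apply: chull_convex => // x /SF; rewrite mem_filter => /andP [/asboolP].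
by [].
Qed.

End Aux2.

Section Aux3.
Variables (R : realType) (N : nat).
Local Notation pt := 'rV[R]_N.

Lemma cp_lip (D : seq pt) (g g' : nat -> R) (d : R) : 0 <= d ->
  (forall j, (j < (size D).-1)%N -> `|g j - g' j| <= d) ->
  `|cpullback D g - cpullback D g'| <= d *+ 2 * \sum_(j < size D) `|nth 0 D j|.
Proof.
move=> d0 Hg.
have HY : forall j, `|Yext (size D).-1 g j - Yext (size D).-1 g' j| <= d.
  by move=> j; rewrite /Yext; case: ifP => [/Hg //|_]; rewrite subrr normr0.
have HB : forall j, `|cbary (size D).-1 g j - cbary (size D).-1 g' j| <= d *+ 2.
  move=> j; rewrite /cbary.
  have -> : forall a b c e : R, a - b - (c - e) = (a - c) - (b - e).
    by move=> a b c e; ring.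
  apply: le_trans (ler_normB _ _) _; rewrite mulr2n; apply: lerD => //.
  by case: j => [|j]; [rewrite subrr normr0 | exact: HY].
rewrite /cpullback -sumrB mulr_sumr.
apply: le_trans (ler_norm_sum _ _ _) _; apply: ler_sum => j _.
by rewrite -scalerBl normrZ; apply: ler_wpM2r.
Qed.

Lemma cover_D (I : Type) (U : I -> set pt) (D : seq pt) :
  (forall x, exists i, U i x) -> (forall i, open (U i)) ->
  exists L, forall l, (L <= l)%N -> forall g0 : nat -> R,
    (forall j, (j < (size D).-1)%N -> 0 <= g0 j <= 1) ->
    exists i, forall g, (forall j, (j < (size D).-1)%N ->
       `|g j - g0 j| <= ((2 ^ l)%:R)^-1) -> U i (cpullback D g).
Proof.
move=> hcov hopen.
set m := (size D).-1.
pose C := [set v : 'rV[R]_m | forall i, `[0, 1]%classic (v ord0 i)].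
have cC : compact C.
  have := @rV_compact R m (fun=> `[0, 1]%classic).
  by apply => _; exact: segment_compact.
pose P l (v : 'rV[R]_m) := exists i, forall g, (forall j (jm : (j < m)%N),
   `|g j - v ord0 (Ordinal jm)| <= ((2 ^ l)%:R)^-1) -> U i (cpullback D g).
have := (proj1 (compact_near_coveringP C) cC) nat \oo P _.
case.
- move=> x Cx.
  pose xf j := oapp (fun i : 'I_m => x ord0 i) 0 (insub j).
  have xfE : forall j (jm : (j < m)%N), xf j = x ord0 (Ordinal jm).
    by move=> j jm; rewrite /xf insubT.
  have [i Ui] := hcov (cpullback D xf).
  have /nbhs_ballP [e /= e0 be] := hopen i _ Ui.
  set S := \sum_(j < size D) `|nth 0 D j|.
  have S0 : 0 <= S by apply: sumr_ge0.
  pose r := e / (4 * (S + 1)).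
  have hr : r * (4 * (S + 1)) = e by rewrite /r divfK // mulf_neq0 // gt_eqF // ltr_wpDl.
  have r0 : 0 < r by rewrite /r divr_gt0 // mulr_gt0 // ltr_wpDl.
  pose n := Num.Def.archi_bound r^-1.
  exists (ball x r, [set l | (n <= l)%N]); first split => /=.
  + exact: nbhsx_ballx.
  + by exists n.
  case=> x' l /= [bx' nl]; exists i => g Hg; apply: be.
  have lr : ((2 ^ l)%:R)^-1 < r.
    rewrite invf_plt ?posrE ?ltr0n ?expn_gt0 //.
    apply: lt_le_trans (archi_boundP _) _; first by rewrite invr_ge0 ltW.
    rewrite ler_nat (leq_trans (ltnW (ltn_expl n (isT : (1 < 2)%N)))) //.
    by rewrite leq_exp2l.
  rewrite -ball_normE /= distrC.
  apply: (le_lt_trans (@cp_lip D g xf (r *+ 2) _ _)).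
  + by rewrite mulrn_wge0 // ltW.
  + move=> j jm; rewrite (xfE j jm).
    apply: le_trans (ler_distD (x' ord0 (Ordinal jm)) _ _) _.
    rewrite mulr2n; apply: lerD; first by apply: ltW; apply: le_lt_trans lr; exact: Hg.
    apply: ltW; move: bx'; rewrite -ball_normE /= distrC => bx'.
    apply: le_lt_trans bx'.
    have -> : x ord0 (Ordinal jm) - x' ord0 (Ordinal jm) = (x - x') ord0 (Ordinal jm).
      by rewrite !mxE.
    move: (x - x') => M.
    rewrite [leRHS]/Num.norm /= mx_normrE; apply/bigmax_geP; right => /=.
    by exists (ord0, Ordinal jm).
  + rewrite -/S; nra.
- move=> n0 _ Hn0; exists n0 => l ln g0 Hg0.
  have Cv : C (\row_(j < m) g0 j).
    by move=> j; rewrite mxE /= in_itv /=; apply: Hg0.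
  have [i Hi] := Hn0 l ln _ Cv.
  exists i => g Hg; apply: Hi => j jm; rewrite mxE; exact: Hg.
Qed.
End Aux3.

Lemma max_list (T : eqType) (Q : T -> nat -> Prop) (s : seq T) :
  (forall D, exists L, forall l, (L <= l)%N -> Q D l) ->
  exists L, forall l, (L <= l)%N -> forall D, D \in s -> Q D l.
Proof.
move=> H; elim: s => [|a s [L IH]]; first by exists 0%N.
have [La Ha] := H a; exists (maxn La L) => l; rewrite geq_max => /andP [h1 h2] D.
rewrite in_cons => /orP [/eqP ->|Ds]; first exact: Ha.
exact: IH.
Qed.

Theorem lemma3p12 (R : realType) (N : nat) (lt : rel 'rV[R]_N)
  (K : seq (seq 'rV[R]_N)) (I : Type) (U : I -> set 'rV[R]_N) :
  ordered_complex lt K ->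
  (forall i, open (U i) /\ is_convex (U i)) ->
  locally_finite_cover U ->
  exists L : nat, forall l : nat, (L <= l)%N ->
    (forall i, cx_nice (crystalline K l) (cx_restrict (crystalline K l) (U i))) /\
    (forall S, crystalline K l S -> exists i, cx_restrict (crystalline K l) (U i) S).
Proof.
move=> _ HU [Hcov _].
have [L HL] := @max_list _ (fun D l => forall g0 : nat -> R,
    (forall j, (j < (size D).-1)%N -> 0 <= g0 j <= 1) ->
    exists i, forall g, (forall j, (j < (size D).-1)%N ->
       `|g j - g0 j| <= ((2 ^ l)%:R)^-1) -> U i (cpullback D g)) K
  (fun D => cover_D D Hcov (fun i => (HU i).1)).
exists L => l Ll; split.
  by move=> i; apply: nice_all; exact: (HU i).2.
move=> S HS; have HS' := HS.
move: HS => [D [DK [c [p [ks [Hc Hp [Hks ks0] Hstd HSp]]]]]].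
case: ks ks0 Hks Hstd HSp => [//|k0 ks] _ Hks Hstd HSp.
have Hg0 : forall j, (j < (size D).-1)%N -> 0 <= fvert R l c p k0 j <= 1.
  move=> j jm; rewrite /fvert divr_ge0 //= ler_pdivrMr ?ltr0n ?expn_gt0 // mul1r ler_nat.
  by move: (Hc j jm); case: (j \in drop k0 p) => /=; rewrite ?addn1 ?addn0 // => /ltnW.
have [i Hi] := HL l Ll D DK (fvert R l c p k0) Hg0.
exists i; split => //.
apply: chull_convex; first exact: (HU i).2.
move=> x; rewrite (perm_mem HSp) => /mapP [k kks ->].
apply: Hi => j jm; rewrite /fvert -mulrBl normrM.
rewrite [`|_^-1|]ger0_norm ?invr_ge0 ?ler0n //.
apply: ler_piMl; first by rewrite invr_ge0 ler0n.
have E : forall a b b' : R, a + b - (a + b') = b - b' by move=> *; ring.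
rewrite !natrD E.
by case: (j \in drop k p); case: (j \in drop k0 p); rewrite /= ?subrr ?normr0 ?subr0 ?sub0r ?normrN ?normr1.
Qed.
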